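(* Consider the algorithm described in the context. Suppose: (i) $\|\hat H_k\|\leq\kappa_H$ for all $k$, some $\kappa_H\geq1$; (ii) $f$ is bounded below by $f_{\mathrm{low}}$, twice continuously differentiable with $L_H$-Lipschitz Hessian, and $\|\nabla^2 f(\mathbf{x}_k)\|\leq M$ for all $k$; (iii) every step satisfies $\hat{m}_k(\mathbf{0}) - \hat{m}_k(\hat{\mathbf{s}}_k) \geq \kappa_s \max\left(\|\hat{\mathbf{g}}_k\| \min\left(\Delta_k, \frac{\|\hat{\mathbf{g}}_k\|}{\max(\|\hat{H}_k\|,1)}\right), \hat{\tau}^m_k\Delta_k^2\right)$ for some $\kappa_s>0$ independent of $k$. Let $\epsilon>0$ with $\theta := (1-\alpha)^2 - \frac{4M(r-1)\alpha^2}{\epsilon(1-\alpha)^2}>0$, and let $K\geq0$. If $\sigma_k\geq\epsilon$ for all $k\leq K$, then $\#(\mathcal{A}\cap\mathcal{D}^C(\Delta)\cap\mathcal{U})=0$ for all $\Delta\leq c_2\epsilon$, where $$c_2:=\frac{\min(1-\alpha,(1-\alpha)^2,\theta)}{\kappa_\sigma+c_0^{-1}},\quad \kappa_\sigma:=\max(\kappa_{\mathrm{eg}}\Delta_{\max},\kappa_{\mathrm{eh}}),\quad c_0:=\min\left(\frac{1}{\mu},\frac{1}{\kappa_H},\frac{\kappa_s(1-\eta)}{\kappa_{\mathrm{ef}}\Delta_{\max}},\frac{\kappa_s(1-\eta)}{\kappa_{\mathrm{ef}}}\right).$$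
   Context: Algorithm: Let $f:\mathbb{R}^n\to\mathbb{R}$. Fix $\mathbf{x}_0$, $p\in\{1,\ldots,n\}$, $0<\Delta_0\leq\Delta_{\max}$, $0<\gamma_{\mathrm{dec}}<1<\gamma_{\mathrm{inc}}$, $\eta\in(0,1)$, $\mu>0$. For $k=0,1,\ldots$: select a random $P_k\in\mathbb{R}^{n\times p}$; build $\hat m_k(\hat{\mathbf{s}})=f(\mathbf{x}_k)+\hat{\mathbf{g}}_k^T\hat{\mathbf{s}}+\frac12\hat{\mathbf{s}}^T\hat H_k\hat{\mathbf{s}}$ ($\hat H_k$ symmetric) which is $P_k$-fully quadratic: constants $\kappa_{\mathrm{ef}},\kappa_{\mathrm{eg}},\kappa_{\mathrm{eh}}>0$ independent of $k$ with $|f(\mathbf{x}_k+P_k\hat{\mathbf{s}})-\hat m_k(\hat{\mathbf{s}})|\leq\kappa_{\mathrm{ef}}\Delta_k^3$, $\|P_k^T\nabla f(\mathbf{x}_k+P_k\hat{\mathbf{s}})-\nabla\hat m_k(\hat{\mathbf{s}})\|\leq\kappa_{\mathrm{eg}}\Delta_k^2$, $\|P_k^T\nabla^2 f(\mathbf{x}_k+P_k\hat{\mathbf{s}})P_k-\hat H_k\|\leq\kappa_{\mathrm{eh}}\Delta_k$ for all $\|\hat{\mathbf{s}}\|\leq\Delta_k$; compute a step $\hat{\mathbf{s}}_k$ with $\|\hat{\mathbf{s}}_k\|\leq\Delta_k$; let $R_k:=\frac{f(\mathbf{x}_k)-f(\mathbf{x}_k+P_k\hat{\mathbf{s}}_k)}{\hat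 m_k(\mathbf{0})-\hat m_k(\hat{\mathbf{s}}_k)}$, $\hat\tau^m_k:=\max(-\lambda_{\min}(\hat H_k),0)$, $\hat\sigma^m_k:=\max(\|\hat{\mathbf{g}}_k\|,\hat\tau^m_k)$; if $R_k\geq\eta$ and $\hat\sigma^m_k\geq\mu\Delta_k$ the iteration is successful: $\mathbf{x}_{k+1}=\mathbf{x}_k+P_k\hat{\mathbf{s}}_k$, $\Delta_{k+1}=\min(\gamma_{\mathrm{inc}}\Delta_k,\Delta_{\max})$; otherwise unsuccessful: $\mathbf{x}_{k+1}=\mathbf{x}_k$, $\Delta_{k+1}=\gamma_{\mathrm{dec}}\Delta_k$. Criticality: $\sigma_k:=\max(\|\nabla f(\mathbf{x}_k)\|,\max(-\lambda_{\min}(\nabla^2 f(\mathbf{x}_k)),0))$. Well-alignment: write $\nabla^2 f(\mathbf{x}_k)=\sum_{i=1}^r\lambda_i\mathbf{v}_i\mathbf{v}_i^T$, $\lambda_1\geq\cdots\geq\lambda_r$, $r=\operatorname{rank}(\nabla^2 f(\mathbf{x}_k))$, $\mathbf{v}_i$ orthonormal, $\hat{\mathbf{v}}_i:=P_k^T\mathbf{v}_i$; $P_k$ is well-aligned if $\|P_k\|\leq P_{\max}$, $\|P_k^T\nabla f(\mathbf{x}_k)\|\geq(1-\alpha)\|\nabla f(\mathbf{x}_k)\|$, $\|\hat{\mathbf{v}}_r\|\geq1-\alpha$, and $(\hat{\mathbf{v}}_i^T\hat{\mathbf{v}}_r)^2\leq4\alpha^2$ for $i=1,\ldots,r-1$,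 for fixed $\alpha\in(0,1)$, $P_{\max}>0$ independent of $k$. (The paper writes $r$ without an index $k$; $\theta$ is defined with this $r$.) Index sets, for fixed $K$: $\mathcal{A}$ = iterations in $\{0,\ldots,K\}$ at which $P_k$ is well-aligned; $\mathcal{U}$ = unsuccessful iterations in $\{0,\ldots,K\}$; $\mathcal{D}^C(\Delta)$ = iterations in $\{0,\ldots,K\}$ with $\Delta_k<\Delta$; $\#$ denotes cardinality. *)

(* Defs.v *)
From HB Require Import structures.
From mathcomp Require Import all_boot all_order all_algebra.
From mathcomp Require Import all_classical all_reals all_analysis.
Set Implicit Arguments. Unset Strict Implicit. Unset Printing Implicit Defensive.
Import Order.TTheory GRing.Theory Num.Theory.
Import numFieldNormedType.Exports.
Local Open Scope classical_set_scope.
Local Open Scope ring_scope.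

Section Defs.
Context {R : realType}.

Definition sc (A : 'M[R]_1) : R := A 0 0.

Definition enorm n (v : 'cV[R]_n) : R := Num.sqrt (\sum_(i < n) v i 0 ^+ 2).

Definition opnorm m n (A : 'M[R]_(m, n)) : R :=
  sup [set enorm (A *m y) | y in [set y : 'cV[R]_n | enorm y <= 1]].

Definition lmin n (A : 'M[R]_n) : R := inf [set a : R | eigenvalue A a].

Definition mhat p (f0 : R) (g : 'cV[R]_p) (H : 'M[R]_p) (s : 'cV[R]_p) : R :=
  f0 + sc (g^T *m s) + 2^-1 * sc (s^T *m H *m s).

Definition tau_m p (H : 'M[R]_p) : R := Num.max (- lmin H) 0.
Definition sigma_m p (g : 'cV[R]_p) (H : 'M[R]_p) : R := Num.max (enorm g) (tau_m H).

Definition crit n (gr : 'cV[R]_n) (Hs : 'M[R]_n) : R :=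
  Num.max (enorm gr) (Num.max (- lmin Hs) 0).

Definition tr_ratio n p (f : 'cV[R]_n -> R) (x : 'cV[R]_n) (P : 'M[R]_(n, p))
  (g : 'cV[R]_p) (H : 'M[R]_p) (s : 'cV[R]_p) : R :=
  (f x - f (x + P *m s)) / (mhat (f x) g H 0 - mhat (f x) g H s).

(* well-alignment; the eigenvectors v_1..v_r of the paper are v 0 .. v (r-1) *)
Definition well_aligned n p (Pmax alpha : R) (P : 'M[R]_(n, p)) (gr : 'cV[R]_n)
  (r : nat) (v : nat -> 'cV[R]_n) : Prop :=
  [/\ opnorm P <= Pmax,
      (1 - alpha) * enorm gr <= enorm (P^T *m gr),
      1 - alpha <= enorm (P^T *m v r.-1) &
      forall i, (i < r.-1)%N ->
        sc ((P^T *m v i)^T *m (P^T *m v r.-1)) ^+ 2 <= 4 * alpha ^+ 2].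

End Defs.

(* Main.v *)
Require Import Defs.
From HB Require Import structures.
From mathcomp Require Import all_boot all_order all_algebra.
From mathcomp Require Import all_classical all_reals all_analysis.
From mathcomp Require Import complex.
From mathcomp.algebra_tactics Require Import ring lra.
Import Order.TTheory GRing.Theory Num.Theory.
Import numFieldNormedType.Exports.
Local Open Scope classical_set_scope.
Local Open Scope ring_scope.

Set Implicit Arguments. Unset Strict Implicit. Unset Printing Implicit Defensive.
Local Open Scope sesquilinear_scope.
Lemma herm_rayleigh (C : numClosedFieldType) n (A : 'M[C]_n) (u : 'rV[C]_n) :
  A \is hermsymmx -> u != 0 ->
  exists2 a, eigenvalue A a &
    (a \is Num.real) && (a * (u *m u^t*) 0 0 <= (u *m A *m u^t*) 0 0).
Proof.
move=> hA u0.
have /orthomx_spectralP eA := hermitian_normalmx hA.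
have dreal := hermitian_spectral_diag_real hA.
set P := spectralmx A in eA; set d := spectral_diag A in eA dreal.
have Pu : P \is unitarymx by exact: spectral_unitarymx.
have Punit : P \in unitmx by exact: unitarymx_unit.
have iP : invmx P = P^t* by exact: invmx_unitary.
set w := u *m P^t*.
have wt : w^t* = P *m u^t*.
  by rewrite /w trmx_mul map_mxM trmxCK.
have hQ : u *m A *m u^t* = w *m diag_mx d *m w^t*.
  by rewrite eA iP wt /w !mulmxA.
have hN : u *m u^t* = w *m w^t*.
  by rewrite wt /w mulmxA -(mulmxA u) -iP mulVmx // mulmx1.
have eQ : (w *m diag_mx d *m w^t*) 0 0 = \sum_i d 0 i * (w 0 i * (w 0 i)^*).
  rewrite mul_mx_diag mxE; apply: eq_bigr => i _; rewrite !mxE.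
  by rewrite mulrCA mulrA.
have eN : (w *m w^t*) 0 0 = \sum_i (w 0 i * (w 0 i)^*).
  by rewrite mxE; apply: eq_bigr => i _; rewrite !mxE.
have wP : w *m P = u by rewrite /w -mulmxA -iP mulVmx // mulmx1.
set N := \sum_i (w 0 i * (w 0 i)^*).
set Q := \sum_i d 0 i * (w 0 i * (w 0 i)^*).
have dr i : d 0 i \is Num.real by move/mxOverP: dreal; apply.
have N0 : 0 <= N by apply: sumr_ge0 => i _; exact: mul_conjC_ge0.
have Nr : N \is Num.real by exact: ger0_real.
have Qr : Q \is Num.real.
  by apply: rpred_sum => i _; apply: rpredM; [exact: dr| exact/ger0_real/mul_conjC_ge0].
have [i hi] : exists i, (d 0 i * N <= Q).
  case: (boolP [exists j, d 0 j * N <= Q]) => [/existsP//|/existsPn H].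
  exfalso.
  have lt i : Q < d 0 i * N by rewrite real_ltNge ?H // rpredM.
  have S0 : \sum_i (d 0 i * N - Q) * (w 0 i * (w 0 i)^*) = 0.
    under eq_bigr => j _ do rewrite mulrBl.
    rewrite sumrB -!mulr_sumr.
    rewrite (eq_bigr (fun j => N * (d 0 j * (w 0 j * (w 0 j)^*)))); last first.
      by move=> j _; rewrite mulrAC mulrC mulrA.
    by rewrite -mulr_sumr /Q /N mulrC subrr.
  have pos k : true -> 0 <= (d 0 k * N - Q) * (w 0 k * (w 0 k)^*).
    by move=> _; apply: mulr_ge0; [rewrite subr_ge0 ltW // | exact: mul_conjC_ge0].
  have w0 : w = 0.
    apply/rowP => j; rewrite [in RHS]mxE.
    move: (psumr_eq0P pos S0 (i:=j) isT) => /eqP.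
    rewrite mulf_eq0 subr_eq0 mul_conjC_eq0 => /orP[/eqP e|/eqP //].
    by move: (lt j); rewrite e ltxx.
  by move: u0; rewrite -wP w0 mul0mx eqxx.
exists (d 0 i); last by rewrite dr /= hN hQ eQ eN.
apply/eigenvalueP; exists (delta_mx 0 i *m P).
  rewrite [in LHS]eA !mulmxA mulmxK // scalemxAl; congr (_ *m _).
  apply/rowP => j; rewrite mul_mx_diag !mxE.
  by rewrite eqxx /=; case: (j =P i) => [->|_]; rewrite ?eqxx ?mulr1 ?mul1r ?mulr0 ?mul0r.
apply/negP => /eqP h.
have : ('e_i : 'rV[C]_n) = 0 by rewrite -(mulmxK Punit 'e_i) h mul0mx.
move/matrixP/(_ 0 i); rewrite !mxE !eqxx /=.
by move=> /eqP; rewrite oner_eq0.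
Qed.

Lemma sym_rayleigh (R : rcfType) p (H : 'M[R]_p) (u : 'cV[R]_p) :
  H^T = H -> u != 0 ->
  exists2 a, eigenvalue H a & a * (u^T *m u) 0 0 <= (u^T *m H *m u) 0 0.
Proof.
move=> Hs u0.
pose f := real_complex R.
have hH : (map_mx f H) \is hermsymmx.
  apply: realsym_hermsym.
    by apply/is_hermitianmxP; rewrite expr0 scale1r map_mx_id // map_trmx Hs.
  by apply/mxOverP => i j; rewrite mxE; apply/complex_realP; exists (H i j).
have uC0 : (map_mx f u^T) != 0 by rewrite map_mx_eq0 trmx_eq0.
have [a ea /andP[ar ha]] := herm_rayleigh hH uC0.
have ta : (map_mx f u^T)^t* = map_mx f u.
  rewrite map_trmx trmxK -map_mx_comp; apply/matrixP => i j; rewrite !mxE /=.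
  by apply: conj_Creal; apply/complex_realP; exists (u i j).
exists (complex.Re a).
  rewrite -(eigenvalue_map f); move: ea; congr (is_true (eigenvalue _ _)).
  exact/esym/(RRe_real ar).
move: ha; rewrite ta -map_mxM -!map_mxM !mxE -(RRe_real ar) -rmorphM.
by rewrite lecR.
Qed.

Local Close Scope sesquilinear_scope.

Lemma sq_expand {R : realType} (a b t : R) :
  a ^+ 2 * t ^+ 2 + a * b * (2 * t) + b ^+ 2 = (a * t + b) ^+ 2.
Proof. ring. Qed.

Lemma CS {R : realType} n (a b : 'I_n -> R) :
  (\sum_i a i * b i) ^+ 2 <= (\sum_i a i ^+ 2) * (\sum_i b i ^+ 2).
Proof.
set A := \sum_i a i ^+ 2; set B := \sum_i a i * b i; set C := \sum_i b i ^+ 2.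
have q t : 0 <= A * t ^+ 2 + B * (2 * t) + C.
  have -> : A * t ^+ 2 + B * (2 * t) + C = \sum_i (a i * t + b i) ^+ 2.
    rewrite /A /B /C !mulr_suml -!big_split; apply: eq_bigr => i _ /=.
    exact: sq_expand.
  by apply: sumr_ge0 => i _; exact: sqr_ge0.
have A0 : 0 <= A by apply: sumr_ge0 => i _; exact: sqr_ge0.
have C0 : 0 <= C by apply: sumr_ge0 => i _; exact: sqr_ge0.
case: (eqVneq A 0) => [Ae|An].
  have ai i : a i = 0.
    have := psumr_eq0P (fun i _ => sqr_ge0 (a i)) Ae (i:=i) isT.
    by move/eqP; rewrite sqrf_eq0 => /eqP.
  have -> : B = 0 by rewrite /B big1 // => i _; rewrite ai mul0r.
  by rewrite Ae expr0n /= mul0r.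
have Ap : 0 < A by rewrite lt_def An A0.
have := q (- (B / A)).
set t := B / A.
have At : A * t = B by rewrite /t mulrC divfK.
move=> h.
have h2 : 0 <= A * (A * (- t) ^+ 2 + B * (2 * - t) + C) by apply: mulr_ge0.
have -> : B ^+ 2 = A * (A * t ^+ 2) by rewrite -At; ring.
rewrite -subr_ge0.
have -> : A * C - A * (A * t ^+ 2) = A * (A * (- t) ^+ 2 + B * (2 * - t) + C).
  by rewrite -At; ring.
exact: h2.
Qed.

Definition dot {R : realType} n (u v : 'cV[R]_n) := \sum_i u i 0 * v i 0.

Lemma scE {R : realType} n (u v : 'cV[R]_n) : sc (u^T *m v) = dot u v.
Proof. by rewrite /sc /dot mxE; apply: eq_bigr => i _; rewrite mxE. Qed.

Lemma dotC {R : realType} n (u v : 'cV[R]_n) : dot u v = dot v u.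
Proof. by apply: eq_bigr => i _; rewrite mulrC. Qed.

Lemma dot_ge0 {R : realType} n (u : 'cV[R]_n) : 0 <= dot u u.
Proof. by apply: sumr_ge0 => i _; rewrite -expr2 sqr_ge0. Qed.

Lemma enormE {R : realType} n (u : 'cV[R]_n) : enorm u = Num.sqrt (dot u u).
Proof. by rewrite /enorm /dot; congr Num.sqrt; apply: eq_bigr => i _; rewrite expr2. Qed.

Lemma enorm_ge0 {R : realType} n (u : 'cV[R]_n) : 0 <= enorm u.
Proof. by rewrite enormE sqrtr_ge0. Qed.

Lemma enorm_sq {R : realType} n (u : 'cV[R]_n) : enorm u ^+ 2 = dot u u.
Proof. by rewrite enormE sqr_sqrtr // dot_ge0. Qed.

Lemma CSdot {R : realType} n (u v : 'cV[R]_n) : `|dot u v| <= enorm u * enorm v.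
Proof.
rewrite -(ler_pXn2r (n:=2)) // ?nnegrE ?mulr_ge0 ?enorm_ge0 //.
rewrite exprMn !enorm_sq real_normK ?num_real //.
have := CS (fun i => u i 0) (fun i => v i 0).
have e1 : forall w : 'cV[R]_n, \sum_i w i 0 ^+ 2 = dot w w.
  by move=> w; apply: eq_bigr => i _; rewrite expr2.
by rewrite !e1.
Qed.

Lemma dotDl {R : realType} n (u v w : 'cV[R]_n) : dot (u + v) w = dot u w + dot v w.
Proof. by rewrite /dot -big_split; apply: eq_bigr => i _; rewrite mxE mulrDl. Qed.
Lemma dotDr {R : realType} n (u v w : 'cV[R]_n) : dot w (u + v) = dot w u + dot w v.
Proof. by rewrite dotC dotDl !(dotC w). Qed.
Lemma dotNl {R : realType} n (u w : 'cV[R]_n) : dot (- u) w = - dot u w.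
Proof. by rewrite /dot -sumrN; apply: eq_bigr => i _; rewrite mxE mulNr. Qed.
Lemma dotZl {R : realType} n a (u w : 'cV[R]_n) : dot (a *: u) w = a * dot u w.
Proof. by rewrite /dot mulr_sumr; apply: eq_bigr => i _; rewrite mxE mulrA. Qed.

Lemma enormD {R : realType} n (u v : 'cV[R]_n) : enorm (u + v) <= enorm u + enorm v.
Proof.
rewrite -(ler_pXn2r (n:=2)) // ?nnegrE ?addr_ge0 ?enorm_ge0 //.
rewrite enorm_sq dotDl !dotDr sqrrD !enorm_sq (dotC v u).
have := CSdot u v; have := ler_norm (dot u v) => h1 h2.
have h3 := le_trans h1 h2; rewrite mulr2n; lra.
Qed.

Lemma enormN {R : realType} n (u : 'cV[R]_n) : enorm (- u) = enorm u.
Proof. by rewrite !enormE dotNl dotC dotNl opprK. Qed.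

Lemma enormZ {R : realType} n a (u : 'cV[R]_n) : enorm (a *: u) = `|a| * enorm u.
Proof.
by rewrite !enormE dotZl dotC dotZl mulrA -expr2 sqrtrM ?sqr_ge0 // sqrtr_sqr.
Qed.

Lemma enorm0 {R : realType} n : enorm (0 : 'cV[R]_n) = 0.
Proof. by rewrite enormE /dot big1 ?sqrtr0 // => i _; rewrite mxE mul0r. Qed.


Lemma frob {R : realType} m n (A : 'M[R]_(m, n)) (y : 'cV[R]_n) :
  enorm (A *m y) <= Num.sqrt (\sum_i \sum_j A i j ^+ 2) * enorm y.
Proof.
rewrite -(ler_pXn2r (n:=2)) // ?nnegrE ?mulr_ge0 ?enorm_ge0 ?sqrtr_ge0 //.
rewrite exprMn !enorm_sq sqr_sqrtr; last first.
  by apply: sumr_ge0 => i _; apply: sumr_ge0 => j _; exact: sqr_ge0.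
rewrite /dot mulr_suml; apply: ler_sum => i _.
rewrite -expr2 mxE.
have := CS (fun j => A i j) (fun j => y j 0).
have -> : \sum_i0 y i0 0 * y i0 0 = \sum_j y j 0 ^+ 2 by apply: eq_bigr => j _; rewrite expr2.
by [].
Qed.

Definition opS {R : realType} m n (A : 'M[R]_(m, n)) :=
  [set enorm (A *m y) | y in [set y : 'cV[R]_n | enorm y <= 1]].

Lemma opS_sup {R : realType} m n (A : 'M[R]_(m, n)) : has_sup (opS A).
Proof.
split.
  exists 0; exists 0; first by rewrite /= enorm0 ler01.
  by rewrite mulmx0 enorm0.
exists (Num.sqrt (\sum_i \sum_j A i j ^+ 2)) => _ [y /= hy <-].
apply: le_trans (frob A y) _.
by rewrite ler_piMr ?sqrtr_ge0.
Qed.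

Lemma opnorm_ge0 {R : realType} m n (A : 'M[R]_(m, n)) : 0 <= opnorm A.
Proof.
have := sup_upper_bound (opS_sup A); apply.
by exists 0; rewrite /= ?enorm0 ?ler01 // mulmx0 enorm0.
Qed.

Lemma opnorm_ub {R : realType} m n (A : 'M[R]_(m, n)) (y : 'cV[R]_n) :
  enorm (A *m y) <= opnorm A * enorm y.
Proof.
have [e0|] := eqVneq (enorm y) 0.
  by have := frob A y; rewrite e0 !mulr0.
move=> en.
have ep : 0 < enorm y by rewrite lt_def en enorm_ge0.
set z := (enorm y)^-1 *: y.
have hz : enorm z = 1 by rewrite /z enormZ ger0_norm ?invr_ge0 ?enorm_ge0 // mulVf.
have key : enorm (A *m z) <= opnorm A.
  by apply: (sup_upper_bound (opS_sup A)); exists z; rewrite /= ?hz.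
move: key.
have -> : enorm (A *m z) = (enorm y)^-1 * enorm (A *m y).
  by rewrite /z -scalemxAr enormZ ger0_norm // invr_ge0 enorm_ge0.
by rewrite ler_pdivrMl // mulrC.
Qed.

Lemma quad_ub {R : realType} n (A : 'M[R]_n) (u : 'cV[R]_n) :
  `|sc (u^T *m A *m u)| <= opnorm A * enorm u ^+ 2.
Proof.
rewrite -mulmxA scE; apply: le_trans (CSdot _ _) _.
rewrite mulrC expr2 mulrA ler_wpM2r ?enorm_ge0 //.
exact: (opnorm_ub A u).
Qed.

Lemma sc_sum {R : realType} m n (I : finType) (F : I -> 'M[R]_(m, n)) a b :
  (\sum_i F i) a b = \sum_i F i a b.
Proof. by rewrite summxE. Qed.

Lemma quad_decomp {R : realType} n r (lam : nat -> R) (v : nat -> 'cV[R]_n)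
  (a b : 'cV[R]_n) :
  sc (a^T *m (\sum_(i < r) lam i *: (v i *m (v i)^T)) *m b) =
  \sum_(i < r) lam i * (dot a (v i) * dot (v i) b).
Proof.
rewrite /sc mulmx_sumr mulmx_suml summxE; apply: eq_bigr => i _.
rewrite -scalemxAr -scalemxAl mxE; congr (_ * _).
rewrite !mulmxA -[a^T *m v i *m (v i)^T *m b]mulmxA mxE big_ord1.
by rewrite -!scE.
Qed.

Lemma decomp_sym {R : realType} n r (lam : nat -> R) (v : nat -> 'cV[R]_n) :
  (\sum_(i < r) lam i *: (v i *m (v i)^T))^T = \sum_(i < r) lam i *: (v i *m (v i)^T).
Proof.
apply/matrixP => j k; rewrite mxE !summxE; apply: eq_bigr => i _.
by rewrite !mxE; congr (_ * _); apply: eq_bigr => l _; rewrite !mxE mulrC.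
Qed.

Lemma decomp_eig {R : realType} n r (lam : nat -> R) (v : nat -> 'cV[R]_n) a :
  (forall i j, (i < r)%N -> (j < r)%N -> sc ((v i)^T *m v j) = (i == j)%:R) ->
  eigenvalue (\sum_(i < r) lam i *: (v i *m (v i)^T)) a ->
  a = 0 \/ exists2 j, (j < r)%N & a = lam j.
Proof.
set Hs := \sum_(i < r) _.
move=> orth /eigenvalueP [w hw w0].
have orth' i j : (i < r)%N -> (j < r)%N -> dot (v i) (v j) = (i == j)%:R.
  by move=> hi hj; rewrite -scE orth.
set c := w^T.
have hc : Hs *m c = a *: c.
  by rewrite /c -[Hs]decomp_sym -trmx_mul hw linearZ.
have c0 : c != 0 by rewrite /c trmx_eq0.
have key j : (j < r)%N -> (a - lam j) * dot (v j) c = 0.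
  move=> jr.
  have e1 : dot (v j) (Hs *m c) = lam j * dot (v j) c.
    rewrite -scE mulmxA quad_decomp (bigD1 (Ordinal jr)) //= big1 ?addr0.
      by rewrite orth' // eqxx mul1r.
    move=> i /eqP ne; rewrite orth' //.
    case: eqP => [e|_]; last by rewrite /= mul0r mulr0.
    by case: ne; apply: val_inj; rewrite /= e.
  have e2 : dot (v j) (Hs *m c) = a * dot (v j) c.
    by rewrite hc dotC dotZl dotC.
  by rewrite mulrBl -e1 -e2 subrr.
case: (boolP [exists j : 'I_r, dot (v j) c != 0]).
  move=> /existsP [j hj]; right; exists j => //.
  by have /eqP := key j (ltn_ord j); rewrite mulf_eq0 (negbTE hj) orbF subr_eq0 => /eqP.
move=> /existsPn hn; left.
have : a *: c = 0.
  rewrite -hc /Hs mulmx_suml big1 // => i _.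
  rewrite -scalemxAl -mulmxA.
  have -> : (v i)^T *m c = 0.
    apply/matrixP => x y; rewrite !ord1 [RHS]mxE.
    have := hn i; rewrite negbK => /eqP <-.
    by rewrite -scE.
  by rewrite mulmx0 scaler0.
by move/eqP; rewrite scaler_eq0 (negbTE c0) orbF => /eqP.
Qed.

Lemma lmin_decomp_lb {R : realType} n r (lam : nat -> R) (v : nat -> 'cV[R]_n) :
  (forall i j, (i < r)%N -> (j < r)%N -> sc ((v i)^T *m v j) = (i == j)%:R) ->
  (forall i j, (i <= j)%N -> (j < r)%N -> lam j <= lam i) ->
  (0 < r)%N ->
  Num.min (lam r.-1) 0 <= lmin (\sum_(i < r) lam i *: (v i *m (v i)^T)).
Proof.
move=> orth ord r0; rewrite /lmin.
case: (pselect (exists a, eigenvalue (\sum_(i < r) lam i *: (v i *m (v i)^T)) a)).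
  move=> [a ha]; apply: lb_le_inf; first by exists a.
  move=> b hb; case: (decomp_eig orth hb) => [->|[j jr ->]].
    by rewrite ge_min lexx orbT.
  rewrite ge_min; apply/orP; left; apply: ord; last by rewrite prednK.
  by rewrite -ltnS prednK.
move=> hn.
have -> : [set a : R | eigenvalue (\sum_(i < r) lam i *: (v i *m (v i)^T)) a] = set0.
  by apply/seteqP; split => x //= hx; apply: hn; exists x.
by rewrite inf0 ge_min lexx orbT.
Qed.

Lemma eig_bound {R : realType} p (H : 'M[R]_p) a :
  H^T = H -> eigenvalue H a -> `|a| <= opnorm H.
Proof.
move=> Hs /eigenvalueP [w hw w0].
have hc : H *m w^T = a *: w^T by rewrite -[H]Hs -trmx_mul hw linearZ.
have := opnorm_ub H w^T; rewrite hc enormZ.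
have ep : 0 < enorm w^T.
  rewrite lt_def enorm_ge0 andbT; apply/eqP => e.
  have : dot w^T w^T = 0 by rewrite -enorm_sq e expr0n.
  move=> d0; move: w0; rewrite -trmx_eq0 => /eqP; apply; apply/matrixP => i j.
  rewrite ord1 mxE.
  have d1 : \sum_k w^T k 0 ^+ 2 = 0.
    by rewrite -[RHS]d0 /dot; apply: eq_bigr => k _; rewrite expr2.
  have := psumr_eq0P (fun (k : 'I_p) _ => sqr_ge0 (w^T k 0)) d1 (i:=i) isT.
  move=> /eqP; rewrite sqrf_eq0 => /eqP.
  by rewrite !mxE.
by rewrite ler_pM2r.
Qed.

Lemma lmin_ub {R : realType} p (H : 'M[R]_p) (u : 'cV[R]_p) :
  H^T = H -> u != 0 -> lmin H * dot u u <= sc (u^T *m H *m u).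
Proof.
move=> Hs u0.
have [b eb hb] := sym_rayleigh Hs u0.
have lb : lmin H <= b.
  apply: (ge_inf); last by [].
  exists (- opnorm H) => a ha.
  by rewrite lerNl; apply: le_trans (eig_bound Hs ha); rewrite -normrN ler_norm.
apply: le_trans (_ : b * dot u u <= _).
  by rewrite ler_wpM2r // dot_ge0.
by move: hb; rewrite -scE.
Qed.

Lemma decomp_diag {R : realType} n r (lam : nat -> R) (v : nat -> 'cV[R]_n) i :
  (forall i j, (i < r)%N -> (j < r)%N -> sc ((v i)^T *m v j) = (i == j)%:R) ->
  (i < r)%N ->
  sc ((v i)^T *m (\sum_(i < r) lam i *: (v i *m (v i)^T)) *m v i) = lam i.
Proof.
move=> orth ir.
have orth' a b : (a < r)%N -> (b < r)%N -> dot (v a) (v b) = (a == b)%:R.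
  by move=> ha hb; rewrite -scE orth.
rewrite quad_decomp (bigD1 (Ordinal ir)) //= big1 ?addr0.
  by rewrite orth' // eqxx !mulr1.
move=> j /eqP ne; rewrite orth' //.
case: eqP => [e|_]; last by rewrite /= mul0r mulr0.
by case: ne; apply: val_inj; rewrite /= e.
Qed.

Lemma dotP {R : realType} n p (P : 'M[R]_(n, p)) u w :
  dot (P *m u) w = dot u (P^T *m w).
Proof. by rewrite -!scE trmx_mul mulmxA. Qed.

Lemma sc_sub {R : realType} (A B : 'M[R]_1) : sc (A - B) = sc A - sc B.
Proof. by rewrite /sc !mxE. Qed.

Unset Implicit Arguments. Set Strict Implicit.

Lemma stepB {R : realType} (eta ks kef kH Dm Ci D G T opH dec a : R) :
  0 < eta -> eta < 1 -> 0 < ks -> 0 < kef -> 0 < D -> D <= Dm -> 0 < Ci ->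
  0 <= G -> 0 <= T -> opH <= kH -> 1 <= kH -> kH <= Ci ->
  kef * Dm <= ks * (1 - eta) * Ci -> kef <= ks * (1 - eta) * Ci ->
  ks * Num.max (G * Num.min D (G / Num.max opH 1)) (T * D ^+ 2) <= dec ->
  `|a| <= kef * D ^+ 3 ->
  D * Ci <= Num.max G T ->
  eta <= (dec - a) / dec.
Proof.
move=> e0 e1 ks0 kef0 D0 DDm Ci0 G0 T0 oH kH1 kHC h1 h2 hdec ha hS.
have key : 0 < dec /\ kef * D ^+ 3 <= (1 - eta) * dec.
  have [GT|TG] := leP (D * Ci) G.
    have m1 : 0 < Num.max opH 1 by rewrite lt_max ltr01 orbT.
    have m2 : Num.max opH 1 <= kH by rewrite ge_max oH kH1.
    have hmin : Num.min D (G / Num.max opH 1) = D.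
      apply/min_idPl; rewrite ler_pdivlMr //.
      apply: le_trans GT; apply: ler_pM; rewrite ?(ltW D0) //.
        by apply: ltW.
      exact: le_trans m2 kHC.
    have d1 : ks * (D * Ci * D) <= dec.
      apply: le_trans hdec; rewrite ler_pM2l // hmin le_max; apply/orP; left.
      by rewrite ler_pM2r.
    split; first by apply: lt_le_trans d1; rewrite !mulr_gt0.
    have : kef * D <= kef * Dm by rewrite ler_pM2l.
    nra.
  have d1 : ks * (D * Ci * D ^+ 2) <= dec.
    apply: le_trans hdec; rewrite ler_pM2l // le_max; apply/orP; right.
    rewrite ler_pM2r ?exprn_gt0 //.
    move: hS; rewrite le_max => /orP [h|//].
    by move: (lt_le_trans TG h); rewrite ltxx.
  split; first by apply: lt_le_trans d1; rewrite !mulr_gt0 ?exprn_gt0.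
  have p1 : kef * D ^+ 3 <= ks * (1 - eta) * Ci * D ^+ 3 by rewrite ler_pM2r ?exprn_gt0.
  have p2 : (1 - eta) * (ks * (D * Ci * D ^+ 2)) <= (1 - eta) * dec.
    by rewrite ler_wpM2l // subr_ge0 ltW.
  have e3 : ks * (1 - eta) * Ci * D ^+ 3 = (1 - eta) * (ks * (D * Ci * D ^+ 2)) by ring.
  lra.
case: key => dp kd.
rewrite ler_pdivlMr //.
have : a <= `|a| := ler_norm a.
lra.
Qed.

Theorem lemma3p11 (R : realType) (n p : nat)
  (f : 'cV[R]_n -> R) (gf : 'cV[R]_n -> 'cV[R]_n) (Hf : 'cV[R]_n -> 'M[R]_n)
  (x : nat -> 'cV[R]_n) (Delta : nat -> R) (P : nat -> 'M[R]_(n, p))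
  (g : nat -> 'cV[R]_p) (H : nat -> 'M[R]_p) (s : nat -> 'cV[R]_p)
  (Deltamax gdec ginc eta mu kef keg keh kH flow LH M ks alpha Pmax eps : R)
  (r K : nat) (lam : nat -> nat -> R) (v : nat -> nat -> 'cV[R]_n) :
  (* algorithm parameters *)
  (0 < p)%N -> (p <= n)%N ->
  0 < Delta 0 -> Delta 0 <= Deltamax ->
  0 < gdec -> gdec < 1 -> 1 < ginc ->
  0 < eta -> eta < 1 -> 0 < mu ->
  (* the function: gradient gf, Hessian Hf; C^2, L_H-Lipschitz Hessian, bounded below *)
  (forall y, differentiable f y /\
     ('d f y : 'cV[R]_n -> R) = (fun h => sc ((gf y)^T *m h))) ->
  (forall y, differentiable gf y /\
     ('d gf y : 'cV[R]_n -> 'cV[R]_n) = (fun h => Hf y *m h)) ->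
  continuous Hf ->
  (forall y z, opnorm (Hf y - Hf z) <= LH * enorm (y - z)) ->
  (forall y, flow <= f y) ->
  (forall k, opnorm (Hf (x k)) <= M) ->
  (* models: symmetric, P_k-fully quadratic, bounded Hessians *)
  0 < kef -> 0 < keg -> 0 < keh ->
  (forall k, (H k)^T = H k) ->
  (forall k sh, enorm sh <= Delta k ->
     [/\ `| f (x k + P k *m sh) - mhat (f (x k)) (g k) (H k) sh | <= kef * Delta k ^+ 3,
         enorm ((P k)^T *m gf (x k + P k *m sh) - (g k + H k *m sh)) <= keg * Delta k ^+ 2 &
         opnorm ((P k)^T *m Hf (x k + P k *m sh) *m P k - H k) <= keh * Delta k]) ->
  1 <= kH -> (forall k, opnorm (H k) <= kH) ->
  (* steps *)
  (forall k, enorm (s k) <= Delta k) ->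
  0 < ks ->
  (forall k, mhat (f (x k)) (g k) (H k) 0 - mhat (f (x k)) (g k) (H k) (s k) >=
     ks * Num.max (enorm (g k) * Num.min (Delta k) (enorm (g k) / Num.max (opnorm (H k)) 1))
                  (tau_m (H k) * Delta k ^+ 2)) ->
  (* iterate updates *)
  (forall k,
     if (eta <= tr_ratio f (x k) (P k) (g k) (H k) (s k)) && (mu * Delta k <= sigma_m (g k) (H k))
     then x k.+1 = x k + P k *m s k /\ Delta k.+1 = Num.min (ginc * Delta k) Deltamax
     else x k.+1 = x k /\ Delta k.+1 = gdec * Delta k) ->
  (* eigendecompositions of the Hessians at the iterates, of rank r *)
  (0 < r)%N ->
  (forall k, (k <= K)%N ->
     [/\ Hf (x k) = \sum_(i < r) lam k i *: (v k i *m (v k i)^T),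
         \rank (Hf (x k)) = r,
         (forall i j, (i < r)%N -> (j < r)%N -> sc ((v k i)^T *m v k j) = (i == j)%:R) &
         (forall i j, (i <= j)%N -> (j < r)%N -> lam k j <= lam k i)]) ->
  (* well-alignment constants *)
  0 < alpha -> alpha < 1 -> 0 < Pmax ->
  (* criticality *)
  0 < eps ->
  let theta := (1 - alpha) ^+ 2
               - 4 * M * (r%:R - 1) * alpha ^+ 2 / (eps * (1 - alpha) ^+ 2) in
  0 < theta ->
  (forall k, (k <= K)%N -> eps <= crit (gf (x k)) (Hf (x k))) ->
  let c0 := Num.min (Num.min (mu^-1) (kH^-1))
              (Num.min (ks * (1 - eta) / (kef * Deltamax)) (ks * (1 - eta) / kef)) in
  let ksigma := Num.max (keg * Deltamax) keh in
  let c2 := Num.min (Num.min (1 - alpha) ((1 - alpha) ^+ 2)) theta / (ksigma + c0^-1) in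
  forall D, D <= c2 * eps ->
    [set k : nat | [/\ (k <= K)%N,
        well_aligned Pmax alpha (P k) (gf (x k)) r (v k),
        ~ ((eta <= tr_ratio f (x k) (P k) (g k) (H k) (s k)) /\ (mu * Delta k <= sigma_m (g k) (H k))) &
        Delta k < D]] = set0.

Proof.
move=> p0 pn D0p D0m gd0 gd1 gi1 eta0 eta1 mu0 _ _ _ _ _ hM kef0 keg0 keh0 Hsym hfq
  kH1 hkH hs ks0 hdec hupd r0 heig al0 al1 Pm0 eps0 theta th0 hcrit c0 ksigma c2 D hD.
have Dm0 : 0 < Deltamax := lt_le_trans D0p D0m.
have hDel : forall k, 0 < Delta k /\ Delta k <= Deltamax.
  elim => [|k [ih1 ih2]]; first by split.
  have := hupd k; case: ifP => _ [_ ->]; split.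
  - by rewrite lt_min Dm0 andbT mulr_gt0 // (lt_trans ltr01 gi1).
  - by rewrite ge_min lexx orbT.
  - by rewrite mulr_gt0.
  - by apply: le_trans ih2; rewrite ler_piMl // ?ltW.
have e1 : 0 < 1 - eta by rewrite subr_gt0.
have c0p : 0 < c0.
  by rewrite /c0 !lt_min !invr_gt0 mu0 (lt_le_trans ltr01 kH1) !divr_gt0 ?mulr_gt0.
set Ci := c0^-1.
have Ci0 : 0 < Ci by rewrite invr_gt0.
have hinv X Y : 0 < Y -> c0 <= X / Y -> Y <= X * Ci.
  by move=> Y0 h; rewrite ler_pdivlMr // mulrC -ler_pdivlMr.
have muCi : mu <= Ci.
  rewrite -[Ci]mul1r; apply: hinv => //; rewrite div1r /c0 ge_min; apply/orP; left.
  by rewrite ge_min lexx.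
have kHCi : kH <= Ci.
  rewrite -[Ci]mul1r; apply: hinv; first exact: (lt_le_trans ltr01 kH1).
  by rewrite div1r /c0 ge_min; apply/orP; left; rewrite ge_min lexx orbT.
have kefCi1 : kef * Deltamax <= ks * (1 - eta) * Ci.
  apply: hinv; first by rewrite mulr_gt0.
  by rewrite /c0 ge_min; apply/orP; right; rewrite ge_min lexx.
have kefCi2 : kef <= ks * (1 - eta) * Ci.
  apply: hinv => //.
  by rewrite /c0 ge_min; apply/orP; right; rewrite ge_min lexx orbT.
have ksig1 : keg * Deltamax <= ksigma by rewrite /ksigma le_max lexx.
have ksig2 : keh <= ksigma by rewrite /ksigma le_max lexx orbT.
have ksig0 : 0 < ksigma by apply: lt_le_trans ksig2.
set m3 := Num.min (Num.min (1 - alpha) ((1 - alpha) ^+ 2)) theta.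
have m3a : m3 <= 1 - alpha by rewrite /m3 ge_min; apply/orP; left; rewrite ge_min lexx.
have m3t : m3 <= theta by rewrite /m3 ge_min lexx orbT.
apply/seteqP; split => [k [hk hwa hns hDk]|//]; exfalso; apply: hns.
have [Dk0 DkM] := hDel k.
have hDc : Delta k * (ksigma + Ci) <= m3 * eps.
  have : Delta k <= c2 * eps := le_trans (ltW hDk) hD.
  by rewrite /c2 mulrAC ler_pdivlMr // addr_gt0.
have h0 : enorm (0 : 'cV[R]_p) <= Delta k by rewrite enorm0 ltW.
have [_ hg hh] := hfq k 0 h0.
rewrite !mulmx0 !addr0 in hg hh.
have key : Delta k * Ci <= sigma_m (g k) (H k).
  case: hwa => wa1 wa2 wa3 wa4.
  have hc := hcrit k hk.
  rewrite /sigma_m.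
  have [gbig|gsmall] := leP eps (enorm (gf (x k))).
    apply: le_trans (_ : enorm (g k) <= _); last by rewrite le_max lexx.
    have t1 : enorm ((P k)^T *m gf (x k)) <=
        enorm ((P k)^T *m gf (x k) - g k) + enorm (g k).
      by have := enormD ((P k)^T *m gf (x k) - g k) (g k); rewrite subrK.
    have t2 : (1 - alpha) * eps <= (1 - alpha) * enorm (gf (x k)).
      by rewrite ler_wpM2l // subr_ge0 ltW.
    have t3 : keg * Delta k ^+ 2 <= ksigma * Delta k.
      apply: le_trans (_ : keg * Deltamax * Delta k <= _); last by rewrite ler_pM2r.
      by rewrite expr2 mulrA ler_pM2r // ler_pM2l.
    have t4 : m3 * eps <= (1 - alpha) * eps by rewrite ler_pM2r.
    lra.
  have hc2 : eps <= - lmin (Hf (x k)).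
    move: hc; rewrite /crit le_max => /orP [h|]; first by move: (lt_le_trans gsmall h); rewrite ltxx.
    rewrite le_max => /orP [//|h]; by move: (lt_le_trans eps0 h); rewrite ltxx.
  apply: le_trans (_ : tau_m (H k) <= _); last by rewrite le_max lexx orbT.
  case: (heig k hk) => hdecH _ horth hord.
  have [r' er] : exists r', r = r'.+1 by exists r.-1; rewrite prednK.
  subst r.
  have hl : lam k r' <= - eps.
    rewrite leNgt; apply/negP => hlt.
    have := lmin_decomp_lb horth hord r0; rewrite -hdecH /= => hmin.
    have : - eps < Num.min (lam k r') 0 by rewrite lt_min hlt oppr_lt0 eps0.
    lra.
  set u := (P k)^T *m v k r'.
  have a0 : 0 < 1 - alpha by rewrite subr_gt0.
  have hN : (1 - alpha) ^+ 2 <= dot u u.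
    by rewrite -enorm_sq !expr2; apply: ler_pM => //; exact: ltW.
  have a20 : 0 < (1 - alpha) ^+ 2 by rewrite exprn_gt0.
  have N0 : 0 < dot u u := lt_le_trans a20 hN.
  have u0 : u != 0.
    by apply/eqP => e; move: N0; rewrite -enorm_sq e enorm0 expr0n ltxx.
  have hl1 := lmin_ub (Hsym k) u0.
  set X := (P k)^T *m Hf (x k) *m P k - H k.
  have eQ : sc (u^T *m H k *m u) =
      sc ((P k *m u)^T *m Hf (x k) *m (P k *m u)) - sc (u^T *m X *m u).
    rewrite /X mulmxBr mulmxBl sc_sub [(P k *m u)^T]trmx_mul !mulmxA; ring.
  have hX : `|sc (u^T *m X *m u)| <= keh * Delta k * dot u u.
    apply: le_trans (quad_ub X u) _; rewrite enorm_sq ler_pM2r //.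
  have M0 : 0 <= M := le_trans (opnorm_ge0 _) (hM k).
  have hlam i : (i < r')%N -> lam k i * dot ((P k)^T *m v k i) u ^+ 2
      <= M * (4 * alpha ^+ 2).
    move=> ir.
    have hs2 : dot ((P k)^T *m v k i) u ^+ 2 <= 4 * alpha ^+ 2.
      by have := wa4 i ir; rewrite scE.
    have hli : `|lam k i| <= M.
      have ir' : (i < r'.+1)%N by apply: ltnW.
      rewrite -(decomp_diag (lam k) horth ir') -hdecH.
      apply: le_trans (quad_ub _ _) _.
      rewrite enorm_sq -scE horth // eqxx mulr1.
      exact: hM.
    apply: le_trans (_ : `|lam k i| * dot ((P k)^T *m v k i) u ^+ 2 <= _).
      by rewrite ler_wpM2r ?sqr_ge0 ?ler_norm.
    by apply: ler_pM; rewrite ?normr_ge0 ?sqr_ge0.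
  have ed i : dot (P k *m u) (v k i) * dot (v k i) (P k *m u) =
      dot ((P k)^T *m v k i) u ^+ 2.
    by rewrite [dot (v k i) _]dotC [dot (P k *m u) _]dotP dotC expr2.
  have hsum : sc ((P k *m u)^T *m Hf (x k) *m (P k *m u)) <=
      lam k r' * dot u u ^+ 2 + r'%:R * (M * (4 * alpha ^+ 2)).
    rewrite hdecH quad_decomp big_ord_recr /=.
    under eq_bigr do rewrite ed.
    rewrite ed addrC lerD2l.
    apply: le_trans (_ : \sum_(i < r') (M * (4 * alpha ^+ 2)) <= _).
      by apply: ler_sum => i _; exact: hlam.
    have sc1 (c : R) : \sum_(i < r') c = r'%:R * c.
      by rewrite sumr_const cardT size_enum_ord mulr_natl.
    by rewrite sc1.
  set L := lmin (H k).
  set N := dot u u.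
  set Kc := r'%:R * (M * (4 * alpha ^+ 2)).
  have Kc0 : 0 <= Kc.
    by apply: mulr_ge0; [exact: ler0n | apply: mulr_ge0 => //; apply: mulr_ge0 => //; exact: sqr_ge0].
  have hX' : - sc (u^T *m X *m u) <= keh * Delta k * N.
    by apply: le_trans hX; rewrite -normrN ler_norm.
  have hlN2 : lam k r' * N ^+ 2 <= - eps * N ^+ 2 by rewrite ler_wpM2r ?sqr_ge0.
  have hQ : L * N <= - eps * N ^+ 2 + Kc + keh * Delta k * N.
    move: hl1 hsum; rewrite eQ -/L -/N -/Kc => hl1 hsum; lra.
  have hL : L <= - eps * N + Kc / N + keh * Delta k.
    have -> : - eps * N + Kc / N + keh * Delta k =
        (- eps * N ^+ 2 + Kc + keh * Delta k * N) / N.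
      by field; rewrite gt_eqF.
    by rewrite ler_pdivlMr.
  move: hN N0; rewrite -/N => hN N0.
  have hK : Kc / N <= Kc / (1 - alpha) ^+ 2.
    by rewrite ler_wpM2l // lef_pV2 ?posrE.
  have heN : eps * (1 - alpha) ^+ 2 <= eps * N by rewrite ler_pM2l.
  have htheta : eps * theta = eps * (1 - alpha) ^+ 2 - Kc / (1 - alpha) ^+ 2.
    have hr : (r'.+1)%:R - 1 = r'%:R :> R by rewrite -natr1 addrK.
    rewrite /theta /Kc hr.
    by field; rewrite !gt_eqF.
  have hem : eps * m3 <= eps * theta by rewrite ler_pM2l.
  have hkd : keh * Delta k <= ksigma * Delta k by rewrite ler_pM2r.
  apply: le_trans (_ : - L <= _); last by rewrite /tau_m le_max lexx.
  lra.
split.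
  have [ha _ _] := hfq k (s k) (hs k).
  have m0 : mhat (f (x k)) (g k) (H k) 0 = f (x k).
    by rewrite /mhat /sc trmx0 !mul0mx !mulmx0 !mxE mulr0 !addr0.
  rewrite /tr_ratio.
  have -> : f (x k) - f (x k + P k *m s k) =
     (mhat (f (x k)) (g k) (H k) 0 - mhat (f (x k)) (g k) (H k) (s k))
     - (f (x k + P k *m s k) - mhat (f (x k)) (g k) (H k) (s k)).
    by rewrite m0; ring.
  apply: (@stepB R eta ks kef kH Deltamax Ci (Delta k) (enorm (g k)) (tau_m (H k)) (opnorm (H k))) => //.
  all: try (exact: enorm_ge0).
  by rewrite /tau_m le_max lexx orbT.
by apply: le_trans key; rewrite [_ * Ci]mulrC ler_pM2r.
Qed.
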